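(* Let $n\ge 1$ and $1\le m\le n$. Then the suffix length of $\mathcal{A}(n,m)$ with respect to lexicographic order satisfies $S(n,m) = 2\,|\mathcal{A}(n,m)| - 1$.
   Context: An ascending composition of a positive integer $n$ is a finite sequence of positive integers $(a_1,\dots,a_k)$, $k\ge1$, with $a_1+\dots+a_k=n$ and $a_1\le\dots\le a_k$. For $1\le m\le n$, $\mathcal{A}(n,m)$ is the set of ascending compositions of $n$ with $a_1\ge m$. List the elements of $\mathcal{A}(n,m)$ in increasing lexicographic order as $b^{(1)},\dots,b^{(N)}$. The suffix length $S(n,m)$ is defined as the number of parts of $b^{(1)}$ plus, for each $i=1,\dots,N-1$, the number of parts of $b^{(i+1)}$ lying beyond the longest common prefix of $b^{(i)}$ and $b^{(i+1)}$ (i.e. if the longest common prefix has length $j$ and $b^{(i+1)}$ has $k'$ parts, this contributes $k'-j$). Equivalently, it counts the number of part-writes needed to generate the list when each composition is obtained from the previous one by rewriting only the differing suffix. *)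

(* Defs.v *)
From mathcomp Require Import all_boot.
Set Implicit Arguments. Unset Strict Implicit. Unset Printing Implicit Defensive.

Definition asc_comp (n m : nat) (s : seq nat) : bool :=
  [&& 0 < size s, all (fun a => 0 < a) s, sorted leq s, sumn s == n
    & m <= head 0 s].

Fixpoint lex_le (s t : seq nat) : bool :=
  match s, t with
  | [::], _ => true
  | _ :: _, [::] => false
  | x :: s', y :: t' => (x < y) || ((x == y) && lex_le s' t')
  end.

Fixpoint all_seqs (k n : nat) : seq (seq nat) :=
  match k with
  | 0 => [:: [::]]
  | k'.+1 => [::] :: [seq x :: s | x <- iota 1 n, s <- all_seqs k' n]
  end.

(* The set A(n,m), listed in increasing lexicographic order.
   Every ascending composition of n has at most n parts, each <= n,
   so it occurs (exactly once) in all_seqs n n. *)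
Definition enumA (n m : nat) : seq (seq nat) :=
  sort lex_le (filter (asc_comp n m) (all_seqs n n)).

Fixpoint lcp (s t : seq nat) : nat :=
  match s, t with
  | x :: s', y :: t' => if x == y then (lcp s' t').+1 else 0
  | _, _ => 0
  end.

Definition suffix_length (L : seq (seq nat)) : nat :=
  match L with
  | [::] => 0
  | b :: L' => size b + sumn (pairmap (fun u v => size v - lcp u v) b L')
  end.

Definition S (n m : nat) : nat := suffix_length (enumA n m).

(* Main.v *)
Require Import Defs.
From mathcomp Require Import all_boot.
From Stdlib Require Import Lia.

Lemma lex_le_refl s : lex_le s s.
Proof. by elim: s => //= x s ->; rewrite eqxx orbT. Qed.

Lemma lex_le_trans : transitive lex_le.
Proof.
move=> t s u; elim: s t u => [|x s IH] [|y t] [|z u] //=.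
case/orP=> [ltyx|/andP[/eqP-> Hts]]; case/orP=> [ltxz|/andP[/eqP<- Hsu]].
- by rewrite (ltn_trans ltyx ltxz).
- by rewrite ltyx.
- by rewrite ltxz.
- by rewrite eqxx (IH _ _ Hts Hsu) orbT.
Qed.

Lemma lex_le_anti : antisymmetric lex_le.
Proof.
elim=> [|x s IH] [|y t] //=; case/andP.
case/orP=> [ltxy|/andP[/eqP-> H1]]; case/orP=> [ltyx|/andP[/eqP H H2]].
- by have := ltn_trans ltxy ltyx; rewrite ltnn.
- by subst; rewrite ltnn in ltxy.
- by rewrite ltnn in ltyx.
- by rewrite (IH t); last by rewrite H1 H2.
Qed.

Lemma lex_le_total : total lex_le.
Proof.
elim=> [|x s IH] [|y t] //=; case: (ltngtP x y) => //= ->.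

Qed.
Ltac slia :=
  try match goal with
  | |- is_true (_ <= _) => apply/leP
  | |- is_true (_ < _) => apply/ltP
  | |- is_true (_ == _) => apply/eqP
  end;
  repeat match goal with
  | x : Equality.sort _ |- _ => change nat in x
  | H : is_true (_ <= _) |- _ => move/leP: H => H
  | H : is_true (_ < _) |- _ => move/ltP: H => H
  | H : context[addn] |- _ => rewrite -plusE in H
  | H : context[subn] |- _ => rewrite -minusE in H
  | H : context[muln] |- _ => rewrite -multE in H
  end;
  rewrite -?plusE -?minusE -?multE; lia.
Goal forall a n : nat, a < n -> a + (n - a) = n.
move=> a n H. slia. Qed.

Fixpoint E (f n m : nat) : seq (seq nat) :=
  match f with
  | 0 => [::]
  | f'.+1 => if n < m then [::] else
      flatten [seq [seq a :: s | s <- E f' (n - a) a] | a <- iota m (n - m)]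
        ++ [:: [:: n]]
  end.

Lemma head_le_sum s : all (fun a => 0 < a) s -> head 0 s <= sumn s.
Proof. by case: s => //= a s _; rewrite leq_addr. Qed.

Lemma memEf f n m x : n <= f -> 0 < m -> (x \in E f n m) = asc_comp n m x.
Proof.
elim: f n m x => [|f IH] n m x Hnf Hm /=.
  rewrite in_nil; symmetry; apply/negbTE; rewrite /asc_comp.
  case: x => [|a s] //; apply/negP => /and5P[_ /andP[Ha _] _ /eqP Hs _].
  move: Hnf; rewrite -Hs leqn0 /= => /eqP H; slia.
case: ltnP => Hmn.
  rewrite in_nil; symmetry; apply/negbTE; apply/negP => /and5P[_ Hp _ /eqP Hs Hh].
  have := head_le_sum x Hp; rewrite Hs => H; slia.
rewrite mem_cat mem_seq1; apply/idP/idP.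
- case/orP.
  + case/flatten_mapP=> a; rewrite mem_iota => /andP[Ha1 Ha2] /mapP[s Hs ->].
    have Han : a < n by slia.
    have := Hs; rewrite IH; [|slia|slia].
    case/and5P=> Hsz Hp Hso /eqP Hsum Hh.
    apply/and5P; split => //=.
    * by rewrite Hp andbT; slia.
    * by case: s Hsz Hp Hso Hsum Hh {Hs} => //= y s' _ _ -> _ ->.
    * by rewrite Hsum; apply/eqP; slia.
  + move/eqP->; rewrite /asc_comp /= addn0 eqxx Hmn andbT /= andbT; slia.
- case: x => [|a s]; first by case/and5P.
  case/and5P=> _ /= /andP[Ha Hp] Hso /eqP Hsum Hh.
  case: s Hp Hso Hsum => [|y s'] Hp Hso Hsum.
    by rewrite addn0 in Hsum; rewrite Hsum eqxx orbT.
  apply/orP; left; apply/flatten_mapP.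
  have Hy : 0 < y by case/andP: Hp.
  have Hys : y <= sumn (y :: s') by apply: (head_le_sum _ Hp).
  have Han : a < n by slia.
  exists a; first by rewrite mem_iota; apply/andP; split; slia.
  apply/mapP; exists (y :: s') => //.
  rewrite IH; [|slia|slia].
  move: Hso => /= /andP[Hay Hso].
  apply/and5P; split => //=. rewrite /= in Hsum; apply/eqP; slia.
Qed.

Definition blocks f n (xs : seq nat) :=
  flatten [seq [seq a :: s | s <- E f (n - a) a] | a <- xs].

Lemma E_S f n m : E f.+1 n m = if n < m then [::] else blocks f n (iota m (n - m)) ++ [:: [:: n]].
Proof. by []. Qed.

Lemma blocks_cons f n a xs : blocks f n (a :: xs) = [seq a :: s | s <- E f (n - a) a] ++ blocks f n xs.
Proof. by []. Qed.

Lemma mem_blocks f n xs x : x \in blocks f n xs -> exists a s, x = a :: s /\ a \in xs.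
Proof.
by case/flatten_mapP=> a Ha /mapP[s _ ->]; exists a, s.
Qed.

Lemma uniq_blocks f n xs : (forall b, uniq (E f (n - b) b)) -> uniq xs -> uniq (blocks f n xs).
Proof.
move=> HU; elim: xs => [|a xs IH] //= /andP[Ha Hxs].
rewrite cat_uniq map_inj_uniq; last by move=> u v [].
rewrite HU IH //= andbT; apply/hasPn => x /mem_blocks[b [s [-> Hb]]].
apply/negP => /mapP[t _ [Eab _]]; subst b; by rewrite Hb in Ha.
Qed.

Lemma uniqE f n m : uniq (E f n m).
Proof.
elim: f n m => [|f IH] n m //=; case: ltnP => // Hmn.
rewrite cat_uniq uniq_blocks ?iota_uniq //= andbT orbF.
apply/negP => /mem_blocks[a [s [[Hna _]]]]; rewrite -Hna mem_iota => /andP[_].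
by rewrite subnKC // ltnn.
Qed.

Lemma lex_cons a s t : lex_le (a :: s) (a :: t) = lex_le s t.
Proof. by rewrite /= ltnn eqxx. Qed.

Lemma pairwise_map_cons a L : pairwise lex_le [seq a :: s | s <- L] = pairwise lex_le L.
Proof.
elim: L => //= x L ->; rewrite all_map; congr (_ && _).
by apply: eq_all => y /=; rewrite ltnn eqxx.
Qed.

Lemma pairwise_blocks f n xs : (forall b, pairwise lex_le (E f (n - b) b)) ->
  sorted ltn xs -> pairwise lex_le (blocks f n xs).
Proof.
move=> HP; elim: xs => [|a xs IH] // Hs.
rewrite blocks_cons pairwise_cat pairwise_map_cons.
rewrite HP IH ?(path_sorted Hs) // andbT.
move: (order_path_min ltn_trans Hs) => /allP Hall.
rewrite andbT; apply/allrelP => x y /mapP[s _ ->] /mem_blocks[b [t [-> Hb]]].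
by rewrite /= (Hall b Hb).
Qed.

Lemma pairwiseE f n m : pairwise lex_le (E f n m).
Proof.
elim: f n m => [|f IH] n m //=; case: ltnP => // Hmn.
rewrite pairwise_cat pairwise_blocks ?iota_ltn_sorted //= andbT.
apply/allrelP => x y /mem_blocks[a [s [-> Ha]]]; rewrite inE => /eqP ->.
move: Ha; rewrite mem_iota subnKC // => /andP[_ Han]; by rewrite /= Han.
Qed.

Definition g (u v : seq nat) := size v - lcp u v.

Lemma sl_cons_def b L : suffix_length (b :: L) = size b + sumn (pairmap g b L).
Proof. by []. Qed.

Lemma pairmap_cons a u L : pairmap g (a :: u) [seq a :: s | s <- L] = pairmap g u L.
Proof.
elim: L u => //= v L IH u; rewrite IH; congr (_ :: _).
by rewrite /g /= eqxx subSS.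
Qed.

Lemma sl_map a L : L != [::] -> suffix_length [seq a :: s | s <- L] = (suffix_length L).+1.
Proof.
case: L => // b L _; rewrite /= -/g pairmap_cons.
by rewrite addSn.
Qed.

Lemma sl_cat b L1 c L2 : lcp (last b L1) c = 0 ->
  suffix_length ((b :: L1) ++ (c :: L2)) = suffix_length (b :: L1) + suffix_length (c :: L2).
Proof.
move=> H; rewrite cat_cons !sl_cons_def pairmap_cat sumn_cat /= -/g.
by rewrite /g H subn0 !addnA.
Qed.

Lemma SLE f n m : E f n m = [::] \/ suffix_length (E f n m) + 1 = 2 * size (E f n m).
Proof.
elim: f n m => [|f IH] n m; first by left.
rewrite E_S; case: ltnP => Hmn; first by left.
right.
have : all (fun a => a < n) (iota m (n - m)) by apply/allP => a; rewrite mem_iota subnKC // => /andP[].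
move: (iota_ltn_sorted m (n - m)).
elim: (iota m (n - m)) => [|a xs IHx] //= Hs /andP[Han Hall].
rewrite -catA.
have {}IHx := IHx (path_sorted Hs) Hall.
move: (order_path_min ltn_trans Hs) => /allP Hlt.
case: (IH (n - a) a) => HE.
  by rewrite HE.
case HEa : (E f (n - a) a) HE => [|e Ea'] HE //.
case HR : (blocks f n xs ++ [:: [:: n]]) IHx => [|c R'] IHx.
  by case: (blocks f n xs) HR.
have Hc : c \in blocks f n xs ++ [:: [:: n]] by rewrite HR mem_head.
set M := [seq a :: s | s <- e :: Ea'].
have HM : M = (a :: e) :: [seq a :: s | s <- Ea'] by [].
rewrite HM sl_cat -?HM.
  rewrite sl_map // size_cat size_map; rewrite ?HEa in HE *; slia.
rewrite (last_map (cons a)).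
move: Hc; rewrite mem_cat => /orP[/mem_blocks [b [t [-> Hb]]]|].
  by rewrite /= ifN //; apply/eqP => Hab; subst b; move: (Hlt a Hb); rewrite ltnn.
by rewrite inE => /eqP -> /=; rewrite ifN //; apply/eqP => Hab; subst; rewrite ltnn in Han.
Qed.

Lemma all_seqs_mem k n x : size x <= k -> all (fun a => 0 < a <= n) x -> x \in all_seqs k n.
Proof.
elim: k x => [|k IH] [|a s] //=; try by rewrite mem_head.
rewrite ltnS => Hs /andP[Ha Hall]; rewrite in_cons; apply/orP; right.
apply: (allpairs_f (fun x s => x :: s)); last exact: IH.
by rewrite mem_iota add1n ltnS.
Qed.

Lemma uniq_all_seqs k n : uniq (all_seqs k n).
Proof.
elim: k => [|k IH] //=; apply/andP; split.
  by apply/negP => /allpairsP[[x y] [_ _]].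
apply: allpairs_uniq => //; first exact: iota_uniq.
by move=> [x1 y1] [x2 y2] _ _ /= [-> ->].
Qed.

Lemma le_sumn a s : a \in s -> a <= sumn s.
Proof.
elim: s => //= b s IH; rewrite in_cons => /orP[/eqP->|/IH H]; first exact: leq_addr.
exact: leq_trans H (leq_addl _ _).
Qed.

Lemma size_sumn s : all (fun a => 0 < a) s -> size s <= sumn s.
Proof.
elim: s => //= a s IH /andP[Ha /IH H]; rewrite -add1n; exact: leq_add.
Qed.

Lemma enumA_E n m : 0 < m -> enumA n m = E n n m.
Proof.
move=> Hm; apply: (sorted_eq lex_le_trans lex_le_anti).
- exact: sort_sorted lex_le_total _.
- by rewrite (sorted_pairwise lex_le_trans) pairwiseE.
rewrite /enumA perm_sort; apply: uniq_perm.
- exact/filter_uniq/uniq_all_seqs.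
- exact: uniqE.
move=> x; rewrite mem_filter; rewrite (memEf n n m x (leqnn n) Hm); apply/andP/idP => [[]//|H]; split => //.
case/and5P: H => _ Hp _ /eqP Hsum _; apply: all_seqs_mem.
  by rewrite -Hsum size_sumn.
apply/allP => a Ha; rewrite (allP Hp a Ha) /= -Hsum; exact: le_sumn.
Qed.

Theorem theorem1 (n m : nat) (hn : 1 <= n) (hm1 : 1 <= m) (hmn : m <= n) :
  S n m = 2 * size (enumA n m) - 1.
Proof.
rewrite /S enumA_E //.
case: (SLE n n m) => H.
  have : [:: n] \in E n n m.
    rewrite memEf //; rewrite /asc_comp /= addn0 eqxx hmn andbT /= andbT; exact: leq_trans hm1 hmn.
  by rewrite H.
by rewrite -H addn1 subn1.
Qed.
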